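(* In a deterministic interest-rate model (as described in the context), if the long Libor rate $L_{0\infty}$ is finite, then for all $t\ge0$ the long Libor rate $L_{t\infty}$ is finite and is given by $L_{t\infty}=P_{0t}L_{0\infty}$.
   Context: A deterministic interest-rate model is given by a deterministic initial discount function $T\mapsto P_{0T}>0$ ($T\ge0$, $P_{00}=1$), with discount bond prices at later times determined by absence of arbitrage as $P_{tT}=P_{0T}/P_{0t}$ for $0\le t<T$. The Libor rate is defined by $P_{tT}=1/[1+(T-t)L_{tT}]$, and the long Libor rate is $L_{t\infty}=\limsup_{T\to\infty}L_{tT}$. *)

(* Defs.v *)
From mathcomp Require Import all_boot all_order all_algebra.
From mathcomp Require Import all_classical all_reals all_analysis.
Set Implicit Arguments. Unset Strict Implicit. Unset Printing Implicit Defensive.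
Import Order.TTheory GRing.Theory Num.Theory.
Import numFieldNormedType.Exports.
Local Open Scope ring_scope.

(* Deterministic model: initial discount function P0 : T |-> P_{0T}.
   Bond price at time t for maturity T: P_{tT} = P_{0T} / P_{0t}. *)
Definition bond (R : realType) (P0 : R -> R) (t T : R) : R := P0 T / P0 t.

(* Libor rate, solving P_{tT} = 1 / (1 + (T - t) L_{tT}) for L_{tT} (T > t). *)
Definition libor (R : realType) (P0 : R -> R) (t T : R) : R :=
  ((bond P0 t T)^-1 - 1) / (T - t).

Definition long_libor (R : realType) (P0 : R -> R) (t : R) : \bar R :=
  limf_esup (fun T : R => (libor P0 t T)%:E) (pinfty_nbhs R).

(* Main.v *)
Require Import Defs.
From mathcomp Require Import all_boot all_order all_algebra.
From mathcomp Require Import all_classical all_reals all_analysis.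
Import Order.TTheory GRing.Theory Num.Theory.
Import numFieldNormedType.Exports.
From mathcomp Require Import ring lra.
Local Open Scope ring_scope.

Section L.
Context (R : realType).
Local Open Scope ereal_scope.
Local Open Scope classical_set_scope.

Lemma esup_scale_le (c : R) (f : R -> R) : (0 < c)%R ->
  limf_esup (fun x : R => (c * f x)%:E) (pinfty_nbhs R) <= c%:E * limf_esup (fun x : R => (f x)%:E) (pinfty_nbhs R).
Proof.
move=> c0.
have cf : c%:E \is a fin_num by [].
have ci0 : (0 < c^-1)%R by rewrite invr_gt0.
suff : c^-1%:E * limf_esup (fun x : R => (c * f x)%:E) (pinfty_nbhs R) <= limf_esup (fun x : R => (f x)%:E) (pinfty_nbhs R).
  move=> H; rewrite -[X in X <= _]mul1e -(@divff _ c) ?gt_eqF//.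
  rewrite EFinM -muleA lee_pmul2l//.
rewrite [X in _ <= X]limf_esupE; apply: le_ereal_inf_tmp => _ [V FV <-].
rewrite -(@lee_pmul2l _ c%:E) // muleA -EFinM divff ?gt_eqF// mul1e.
apply: le_trans (_ : ereal_sup ((fun x : R => (c * f x)%:E) @` V) <= _).
  by rewrite limf_esupE; apply: ereal_inf_lbound; exists V.
apply: ge_ereal_sup => _ [x Vx <-].
rewrite EFinM; apply: lee_wpmul2l; first by rewrite lee_fin ltW.
by apply: ereal_sup_ubound; exists x.
Qed.

Lemma esup_scale (c : R) (f : R -> R) : (0 < c)%R ->
  limf_esup (fun x : R => (c * f x)%:E) (pinfty_nbhs R) = c%:E * limf_esup (fun x : R => (f x)%:E) (pinfty_nbhs R).
Proof.
move=> c0; apply/eqP; rewrite eq_le esup_scale_le //=.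
have ci0 : (0 < c^-1)%R by rewrite invr_gt0.
have H := @esup_scale_le c^-1 (fun x => c * f x)%R ci0.
have E : (fun x : R => (c^-1 * (c * f x))%:E) = (fun x : R => (f x)%:E).
  by apply: funext => x; rewrite mulrA mulVf ?gt_eqF// mul1r.
rewrite E in H.
have := @lee_wpmul2l _ c%:E _ _ _ H; rewrite lee_fin ltW// => /(_ isT).
by rewrite muleA -EFinM divff ?gt_eqF// mul1e.
Qed.

Lemma esup_le_eps (f g : R -> R) :
  (forall e : R, (0 < e)%R -> pinfty_nbhs R [set x | (f x <= g x + e)%R]) ->
  limf_esup (fun x : R => (f x)%:E) (pinfty_nbhs R) <= limf_esup (fun x : R => (g x)%:E) (pinfty_nbhs R).
Proof.
move=> H; apply/lee_addgt0Pr => e e0.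
rewrite -leeBlDr //.
rewrite [X in _ <= X]limf_esupE; apply: le_ereal_inf_tmp => _ [V FV <-].
rewrite leeBlDr //.
have FW : pinfty_nbhs R (V `&` [set x | (f x <= g x + e)%R]) by apply: filterI => //; exact: H.
apply: le_trans (_ : ereal_sup ((fun x : R => (f x)%:E) @` (V `&` [set x | (f x <= g x + e)%R])) <= _).
  by rewrite limf_esupE; apply: ereal_inf_lbound; eexists; first exact: FW.
apply: ge_ereal_sup => _ [x [Vx fx] <-].
apply: le_trans (_ : (g x + e)%:E <= _); first by rewrite lee_fin.
rewrite EFinD leeD2r //; apply: ereal_sup_ubound; by exists x.
Qed.
End L.

Local Open Scope classical_set_scope.
Lemma diff_id (R : realType) (p q T t : R) : 0 < p -> 0 < q -> t < T -> 0 < T ->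
  ((q / p)^-1 - 1) / (T - t) - p * ((q^-1 - 1) / T) =
  (t * (p * ((q^-1 - 1) / T)) + (p - 1)) / (T - t).
Proof.
move=> p0 q0 tT T0.
have ? : q != 0 by rewrite gt_eqF.
have ? : p != 0 by rewrite gt_eqF.
have ? : T != 0 by rewrite gt_eqF.
have ? : T - t != 0 by rewrite subr_eq0 gt_eqF.
rewrite invf_div; field; by apply/and3P.
Qed.

Theorem proposition7 (R : realType) (P0 : R -> R)
  (hpos : forall T : R, 0 <= T -> 0 < P0 T) (h0 : P0 0 = 1)
  (hfin : long_libor P0 0 \is a fin_num) :
  forall t : R, 0 <= t ->
    long_libor P0 t \is a fin_num /\
    long_libor P0 t = ((P0 t)%:E * long_libor P0 0)%E.
Proof.
move=> t t0.
set p := P0 t.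
have p0 : 0 < p by exact: hpos.
set f := fun T => libor P0 0 T.
have fE : forall T, f T = ((P0 T)^-1 - 1) / T.
  by move=> T; rewrite /f /libor /bond h0 divr1 subr0.
set L := fine (long_libor P0 0).
have LE : long_libor P0 0 = L%:E by rewrite /L fineK.
set M : R := `|L| + 2.
have Hbd : pinfty_nbhs R [set T | `|f T| <= M].
  have : (long_libor P0 0 < (L + 1)%:E)%E by rewrite LE lte_fin ltrDl.
  rewrite /long_libor limf_esupE => /ereal_inf_lt [_ [V FV <-]] HV.
  have big : pinfty_nbhs R [set T : R | 1 < T].
    by exists 1; split => //.
  apply: filterS (filterI FV big) => T [VT /= T1].
  have T0 : 0 < T by apply: lt_trans T1.
  have up : f T <= L + 1.
    rewrite -lee_fin; apply: le_trans (ltW HV).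
    by apply: ereal_sup_ubound; exists T.
  have lo : -1 <= f T.
    have qi : 0 <= (P0 T)^-1 by rewrite invr_ge0 ltW // hpos // ltW.
    rewrite fE ler_pdivlMr // mulN1r; lra.
  have n1 := ler_norm L.
  have n2 := ler_norm (- L); rewrite normrN in n2.
  rewrite ler_norml /M; apply/andP; split; lra.
have Mge0 : 0 <= M by rewrite /M addr_ge0.
set K : R := t * (p * M) + `|p - 1|.
have K0 : 0 <= K by rewrite addr_ge0 // mulr_ge0 // mulr_ge0 // ltW.
have Hclose : forall e : R, 0 < e -> pinfty_nbhs R
    [set T | `|libor P0 t T - p * f T| <= e].
  move=> e e0.
  have big : pinfty_nbhs R [set T : R | K / e + t + 1 < T].
    by exists (K / e + t + 1); split => //; apply: num_real.
  apply: filterS (filterI Hbd big) => T [/= fb /= TB].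
  have Ke := divr_ge0 K0 (ltW e0).
  have tT : t < T by lra.
  have T0 : 0 < T by lra.
  have Tt0 : 0 < T - t by rewrite subr_gt0.
  rewrite /libor /bond fE diff_id //; last exact: hpos (ltW T0).
  rewrite -fE normrM [`|(T - t)^-1|]ger0_norm; last by rewrite invr_ge0 ltW.
  rewrite ler_pdivrMr //.
  have h1 : `|t * (p * f T) + (p - 1)| <= K.
    apply: le_trans (ler_normD _ _) _.
    rewrite normrM (ger0_norm t0) normrM (ger0_norm (ltW p0)).
    rewrite /K lerD2r; apply: ler_wpM2l => //; apply: ler_wpM2l => //; exact: ltW.
  have h2 : K / e < T - t by lra.
  rewrite ltr_pdivrMr // in h2.
  lra.
have eq1 : long_libor P0 t = limf_esup (fun x : R => (p * f x)%:E) (pinfty_nbhs R).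
  apply/eqP; rewrite eq_le; apply/andP; split; apply: esup_le_eps => e e0;
    apply: filterS (Hclose e e0) => T /=; rewrite ler_norml => /andP[h1 h2].
    by rewrite -lerBlDl.
  by rewrite -lerBlDl -opprB lerNl.
have eq2 : long_libor P0 t = (p%:E * long_libor P0 0)%E.
  by rewrite eq1 esup_scale.
by split => //; rewrite eq2 LE.
Qed.
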